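(* Let $C$ be a convex set in the plane of diameter $d$, and let $pq$ be a straight-line segment that intersects $C$. Then for every point $r\in C$, $\min\{|rp|,|rq|\}\le \sqrt{d^2+|pq|^2/4}$.
   Context: $|xy|$ denotes the Euclidean distance between points $x$ and $y$. *)

(* Defs.v *)
From Stdlib Require Import Reals.
Open Scope R_scope.

Definition point : Type := (R * R)%type.

Definition pdist (x y : point) : R :=
  sqrt ((fst x - fst y) ^ 2 + (snd x - snd y) ^ 2).

Definition lerp (x y : point) (t : R) : point :=
  ((1 - t) * fst x + t * fst y, (1 - t) * snd x + t * snd y).

Definition convex (C : point -> Prop) : Prop :=
  forall x y t, C x -> C y -> 0 <= t <= 1 -> C (lerp x y t).

Definition is_diameter (C : point -> Prop) (d : R) : Prop :=
  (forall x y, C x -> C y -> pdist x y <= d) /\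
  (forall e, (forall x y, C x -> C y -> pdist x y <= e) -> d <= e).

Definition segment_meets (p q : point) (C : point -> Prop) : Prop :=
  exists t, 0 <= t <= 1 /\ C (lerp p q t).

(* Main.v *)
Require Import Defs.
From Stdlib Require Import Reals Lra Psatz.
Open Scope R_scope.

Lemma pdist_sq x y : pdist x y ^ 2 = (fst x - fst y) ^ 2 + (snd x - snd y) ^ 2.
Proof. unfold pdist. apply pow2_sqrt. apply Rplus_le_le_0_compat; apply pow2_ge_0. Qed.

Theorem lemma1 (C : point -> Prop) (d : R) (p q : point) :
  convex C -> is_diameter C d -> segment_meets p q C ->
  forall r, C r ->
    Rmin (pdist r p) (pdist r q) <= sqrt (d ^ 2 + (pdist p q) ^ 2 / 4).
Proof.
  intros _ [Hd _] [t [Ht Hs]] r Hr.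
  remember (lerp p q t) as s eqn:Es.
  pose proof (Hd _ _ Hr Hs) as H1.
  assert (H0 : 0 <= pdist r s) by apply sqrt_pos.
  assert (H2 : pdist r s ^ 2 <= d ^ 2) by (apply pow_incr; lra).
  rewrite pdist_sq in H2. rewrite pdist_sq.
  destruct r as [r1 r2], p as [p1 p2], q as [q1 q2].
  rewrite Es in H2; unfold lerp in H2; simpl in H2 |- *.
  remember ((r1 - p1) ^ 2 + (r2 - p2) ^ 2) as A eqn:EA.
  remember ((r1 - q1) ^ 2 + (r2 - q2) ^ 2) as B eqn:EB.
  assert (Hid : (1 - t) * A + t * B =
     (r1 - ((1 - t) * p1 + t * q1)) ^ 2 + (r2 - ((1 - t) * p2 + t * q2)) ^ 2
     + t * (1 - t) * ((p1 - q1) ^ 2 + (p2 - q2) ^ 2)) by (subst A B; ring).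
  assert (Ht4 : t * (1 - t) <= 1/4) by (pose proof (pow2_ge_0 (t - 1/2)); nra).
  assert (HD : 0 <= (p1 - q1) ^ 2 + (p2 - q2) ^ 2) by (apply Rplus_le_le_0_compat; apply pow2_ge_0).
  assert (Hc : (1 - t) * A + t * B <= d ^ 2 + ((p1 - q1) ^ 2 + (p2 - q2) ^ 2) / 4) by nra.
  assert (HA : 0 <= A) by (subst A; apply Rplus_le_le_0_compat; apply pow2_ge_0).
  assert (HB : 0 <= B) by (subst B; apply Rplus_le_le_0_compat; apply pow2_ge_0).
  unfold pdist; simpl. replace (Rmin _ _) with (Rmin (sqrt A) (sqrt B)) by (subst A B; reflexivity).
  destruct (Rle_dec A B) as [HAB | HAB].
  - apply Rle_trans with (sqrt A); [apply Rmin_l|].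
    apply sqrt_le_1_alt. nra.
  - apply Rle_trans with (sqrt B); [apply Rmin_r|].
    apply sqrt_le_1_alt. nra.
Qed.
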